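(* Let $\mathcal{Q}=\left(\frac{\lambda,\ \mu}{F}\right)$ be a generalized quaternion algebra and let $A,B\in\mathcal{Q}$ be invertible quaternions that do not commute. If $A,B$ is a matching pair (i.e. $\mathrm{tr}(A)=N(A)\neq 0$ and $A\cdot B=0$), then $A,B$ satisfy the fundamental equation $$A^{-1}B^{-1}AB-BA^{-1}B^{-1}A=B^{-1}AB-A.$$ If moreover $\mathcal{Q}$ is anisotropic, then conversely every pair of invertible, non-commuting $A,B\in\mathcal{Q}$ satisfying the fundamental equation is a matching pair; i.e. in the anisotropic case being a matching pair is necessary and sufficient.
   Context: $F$ is a field of characteristic not $2$, and $\lambda,\mu\in F$ are nonzero. The generalized quaternion algebra $\left(\frac{\lambda,\ \mu}{F}\right)$ is the $4$-dimensional associative $F$-algebra with basis $1,i,j,k$ and relations $i^2=\lambda$, $j^2=\mu$, $ij=-ji=k$. For $A=a_0+a_1i+a_2j+a_3k$ the conjugate is $\overline{A}=a_0-a_1i-a_2j-a_3k$, the norm is $N(A)=A\overline{A}=a_0^2-\lambda a_1^2-\mu a_2^2+\lambda\mu a_3^2\in F$, and the trace is $\mathrm{tr}(A)=A+\overline{A}=2a_0$. The bilinear form is $A\cdot B=\tfrac12(A\overline{B}+B\overline{A})=a_0b_0-\lambda a_1b_1-\mu a_2b_2+\lambda\mu a_3b_3$. A nonzero element $X$ is isotropic if $N(X)=0$; the algebra is anisotropic if it has no isotropic elements. A quaternion $A$ is balanced if $\mathrm{tr}(A)=N(A)\neq 0$; a pair of invertible non-commuting quaternions $A,B$ is a matching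 pair if $A$ is balanced and $A\cdot B=0$. *)

(* Defs.v *)
From HB Require Import structures.
From mathcomp Require Import all_boot all_order all_algebra.
Set Implicit Arguments. Unset Strict Implicit. Unset Printing Implicit Defensive.
Import GRing.Theory.
Local Open Scope ring_scope.

(* a0 + a1 i + a2 j + a3 k *)
Record quat (F : Type) := Quat { q0 : F; q1 : F; q2 : F; q3 : F }.

Section Quaternions.
Variables (F : fieldType) (l m : F).

Definition qzero : quat F := Quat 0 0 0 0.
Definition qone : quat F := Quat 1 0 0 0.

Definition qadd (A B : quat F) : quat F :=
  Quat (q0 A + q0 B) (q1 A + q1 B) (q2 A + q2 B) (q3 A + q3 B).
Definition qopp (A : quat F) : quat F := Quat (- q0 A) (- q1 A) (- q2 A) (- q3 A).
Definition qsub (A B : quat F) : quat F := qadd A (qopp B).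
Definition qscale (c : F) (A : quat F) : quat F :=
  Quat (c * q0 A) (c * q1 A) (c * q2 A) (c * q3 A).

(* multiplication from i^2 = l, j^2 = m, ij = -ji = k *)
Definition qmul (A B : quat F) : quat F :=
  Quat (q0 A * q0 B + l * q1 A * q1 B + m * q2 A * q2 B - l * m * q3 A * q3 B)
       (q0 A * q1 B + q1 A * q0 B - m * q2 A * q3 B + m * q3 A * q2 B)
       (q0 A * q2 B + q2 A * q0 B + l * q1 A * q3 B - l * q3 A * q1 B)
       (q0 A * q3 B + q3 A * q0 B + q1 A * q2 B - q2 A * q1 B).

Definition qconj (A : quat F) : quat F := Quat (q0 A) (- q1 A) (- q2 A) (- q3 A).

Definition qnorm (A : quat F) : F :=
  q0 A ^+ 2 - l * q1 A ^+ 2 - m * q2 A ^+ 2 + l * m * q3 A ^+ 2.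

Definition qtrace (A : quat F) : F := 2%:R * q0 A.

Definition qdot (A B : quat F) : F :=
  q0 A * q0 B - l * q1 A * q1 B - m * q2 A * q2 B + l * m * q3 A * q3 B.

Definition qinvertible (A : quat F) : Prop :=
  exists C, qmul A C = qone /\ qmul C A = qone.

Definition qinv (A : quat F) : quat F := qscale (qnorm A)^-1 (qconj A).

Definition qcommute (A B : quat F) : Prop := qmul A B = qmul B A.

Definition isotropic (X : quat F) : Prop := X <> qzero /\ qnorm X = 0.
Definition anisotropic : Prop := forall X, ~ isotropic X.

Definition balanced (A : quat F) : Prop := qtrace A = qnorm A /\ qnorm A <> 0.

Definition matching_pair (A B : quat F) : Prop :=
  [/\ qinvertible A, qinvertible B, ~ qcommute A B, balanced A & qdot A B = 0].

Definition fundamental_eq (A B : quat F) : Prop :=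
  qsub (qmul (qmul (qmul (qinv A) (qinv B)) A) B)
       (qmul (qmul (qmul B (qinv A)) (qinv B)) A)
  = qsub (qmul (qmul (qinv B) A) B) A.

End Quaternions.

(* Main.v *)
Require Import Defs.
From mathcomp Require Import all_boot all_order all_algebra.
From mathcomp Require Import ring.
From Stdlib Require Import Classical.
Set Implicit Arguments. Unset Strict Implicit.
Import GRing.Theory.
Local Open Scope ring_scope.

Ltac qunfold := cbv [qmul qsub qadd qopp qscale qconj qzero qone q0 q1 q2 q3].

Section Aux.
Variables (F : fieldType) (l m : F).


Lemma norm_mul (A B : quat F) : qnorm l m (qmul l m A B) = qnorm l m A * qnorm l m B.
Proof. case: A => a0 a1 a2 a3; case: B => b0 b1 b2 b3; rewrite /qnorm; qunfold; ring. Qed.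

Lemma inv_norm (A : quat F) : qinvertible l m A -> qnorm l m A != 0.
Proof.
case=> C [h _]; apply/eqP => h0.
have := norm_mul A C; rewrite h h0 mul0r /qnorm; qunfold.
move/eqP; rewrite !expr2 !mulr0 !subr0 addr0 mulr1 oner_eq0 //.
Qed.

Lemma qmulZl c (X Y : quat F) : qmul l m (qscale c X) Y = qscale c (qmul l m X Y).
Proof. case: X => ? ? ? ?; case: Y => ? ? ? ?; qunfold; congr Quat; ring. Qed.
Lemma qmulZr c (X Y : quat F) : qmul l m X (qscale c Y) = qscale c (qmul l m X Y).
Proof. case: X => ? ? ? ?; case: Y => ? ? ? ?; qunfold; congr Quat; ring. Qed.
Lemma qscaleA c d (X : quat F) : qscale c (qscale d X) = qscale (c * d) X.
Proof. case: X => ? ? ? ?; qunfold; congr Quat; ring. Qed.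

Definition Pq (A B : quat F) : quat F :=
  qsub (qscale (qtrace A - qnorm l m A) (qconj B))
       (Quat (2%:R * qdot l m A B) 0 0 0).
Definition Dq (A B : quat F) : quat F := qsub (qmul l m A B) (qmul l m B A).

Lemma polyid (A B : quat F) :
  qsub (qsub (qsub (qmul l m (qmul l m (qmul l m (qconj A) (qconj B)) A) B)
                   (qmul l m (qmul l m (qmul l m B (qconj A)) (qconj B)) A))
             (qscale (qnorm l m A) (qmul l m (qmul l m (qconj B) A) B)))
       (qscale (- (qnorm l m A * qnorm l m B)) A)
  = qmul l m (Pq A B) (Dq A B).
Proof.
case: A => a0 a1 a2 a3; case: B => b0 b1 b2 b3.
rewrite /Pq /Dq /qnorm /qtrace /qdot; qunfold.
congr Quat; ring.
Qed.

Definition LHS (A B : quat F) :=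
  qsub (qmul l m (qmul l m (qmul l m (qinv l m A) (qinv l m B)) A) B)
       (qmul l m (qmul l m (qmul l m B (qinv l m A)) (qinv l m B)) A).
Definition RHS (A B : quat F) := qsub (qmul l m (qmul l m (qinv l m B) A) B) A.

Lemma key (A B : quat F) : qnorm l m A != 0 -> qnorm l m B != 0 ->
  qscale (qnorm l m A * qnorm l m B) (qsub (LHS A B) (RHS A B))
  = qmul l m (Pq A B) (Dq A B).
Proof.
move=> hA hB; rewrite -polyid /LHS /RHS /qinv !(qmulZl, qmulZr, qscaleA).
move: (qmul _ _ _ _) (qmul _ _ (qmul _ _ _ _) _) (qmul _ _ (qmul _ _ _ _) _) hA hB.
move: (qnorm l m A) (qnorm l m B) => n b [x0 x1 x2 x3] [y0 y1 y2 y3] [z0 z1 z2 z3] hA hB.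
case: A => a0 a1 a2 a3.
qunfold; congr Quat; field; by rewrite hA hB.
Qed.

Lemma qsub_eq0 (X Y : quat F) : qsub X Y = (qzero F) -> X = Y.
Proof.
case: X => ? ? ? ?; case: Y => ? ? ? ?; qunfold; case => /eqP h0 /eqP h1 /eqP h2 /eqP h3.
by move: h0 h1 h2 h3; rewrite !subr_eq0 => /eqP-> /eqP-> /eqP-> /eqP->.
Qed.

Lemma qsub_self (X : quat F) : qsub X X = (qzero F).
Proof. case: X => ? ? ? ?; qunfold; congr Quat; ring. Qed.

Lemma qscale0 c : qscale c (qzero F) = (qzero F).
Proof. qunfold; congr Quat; ring. Qed.

Lemma qscale_eq0 c (X : quat F) : c != 0 -> qscale c X = (qzero F) -> X = (qzero F).
Proof.
move=> hc; case: X => x0 x1 x2 x3; qunfold; case=> /eqP h0 /eqP h1 /eqP h2 /eqP h3.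
move: h0 h1 h2 h3; rewrite !mulf_eq0 (negbTE hc) /= => /eqP-> /eqP-> /eqP-> /eqP-> //.
Qed.

Lemma qmul0l (X : quat F) : qmul l m (qzero F) X = (qzero F).
Proof. case: X => ? ? ? ?; qunfold; congr Quat; ring. Qed.

Lemma fund_iff (A B : quat F) : qnorm l m A != 0 -> qnorm l m B != 0 ->
  fundamental_eq l m A B <-> qmul l m (Pq A B) (Dq A B) = (qzero F).
Proof.
move=> hA hB; rewrite -key // /fundamental_eq -/(LHS A B) -/(RHS A B); split.
  by move=> ->; rewrite qsub_self qscale0.
move/qscale_eq0; rewrite mulf_neq0 // => /(_ isT); exact: qsub_eq0.
Qed.

End Aux.

Theorem theorem4p4 (F : fieldType) (l m : F)
  (hchar : (2%:R : F) != 0) (hl : l != 0) (hm : m != 0) :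
  (forall A B : quat F,
     qinvertible l m A -> qinvertible l m B -> ~ qcommute l m A B ->
     matching_pair l m A B -> fundamental_eq l m A B) /\
  (anisotropic l m ->
   forall A B : quat F,
     qinvertible l m A -> qinvertible l m B -> ~ qcommute l m A B ->
     fundamental_eq l m A B -> matching_pair l m A B).
Proof.
split.
  move=> A B iA iB _ [_ _ _ [ht hn] hd].
  apply/fund_iff; try exact: inv_norm.
  have -> : Pq l m A B = (qzero F).
    rewrite /Pq ht hd subrr; case: B {iB hd} => ? ? ? ?; qunfold; congr Quat; ring.
  exact: qmul0l.
move=> an A B iA iB nc.
have nA := inv_norm iA; have nB := inv_norm iB.
move/(fund_iff nA nB) => h.
have nD : qnorm l m (Dq l m A B) != 0.
  apply/eqP => h0; apply: (an (Dq l m A B)); split => //.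
  by move/qsub_eq0.
have nP : qnorm l m (Pq l m A B) = 0.
  have := norm_mul l m (Pq l m A B) (Dq l m A B); rewrite h.
  move=> /esym /eqP; rewrite /qnorm; qunfold.
  rewrite !expr2 !mulr0 !subr0 addr0 -/(qnorm l m (Pq l m A B)) mulf_eq0 (negbTE nD) orbF.
  by move/eqP.
have hP : Pq l m A B = (qzero F).
  apply: NNPP => hne; exact: (an _ (conj hne nP)).
have [e0|ne0] := eqVneq (qtrace A - qnorm l m A) 0.
  split => //.
    split; last exact/eqP.
    by apply/eqP; rewrite -subr_eq0; apply/eqP.
  move: hP; rewrite /Pq e0; destruct B as [b0 b1 b2 b3]; qunfold; case=> h0 _ _ _.
  move: h0; rewrite !mul0r => /eqP; rewrite sub0r oppr_eq0 mulf_eq0 (negbTE hchar) /=.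
  by move/eqP.
exfalso; apply: nc.
move: hP; rewrite /Pq; destruct B as [b0 b1 b2 b3]; qunfold; case=> _ h1 h2 h3.
move: h1 h2 h3; rewrite !subr0 => /eqP h1 /eqP h2 /eqP h3.
move: h1 h2 h3; rewrite !mulf_eq0 !oppr_eq0 (negbTE ne0) /= => /eqP-> /eqP-> /eqP->.
destruct A as [a0 a1 a2 a3]; rewrite /qcommute; qunfold; congr Quat; ring.
Qed.
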